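(* Let $n$ be even, let $\mathbf{X}=\{X_{rj}:r,j=1,\dots,n\}$ be the switch variables of the standard lightbulb process with $X_j=(\sum_{r=1}^nX_{rj})\bmod 2$, and for $i\in\{1,\dots,n\}$ construct $\mathbf{X}^i$ as follows: let $J^i$ have conditional distribution, given $\mathbf{X}$, uniform on $\{j:X_{n/2,j}=1-X_{n/2,i}\}$; if $X_i=1$ set $\mathbf{X}^i=\mathbf{X}$; otherwise let $\mathbf{X}^i$ equal $\mathbf{X}$ except that the values of $X_{n/2,i}$ and $X_{n/2,J^i}$ are interchanged. Then for all $i=1,\dots,n$, $\mathcal{L}(\mathbf{X}^i)=\mathcal{L}(\mathbf{X}\mid X_i=1)$.
   Context: Standard lightbulb process: $n$ bulbs, all initially off, $n$ stages; at stage $r=1,\dots,n$ a uniformly random subset of exactly $r$ bulbs is toggled, independently across stages. The switch variable $X_{rj}\in\{0,1\}$ is $1$ iff bulb $j$ is toggled at stage $r$; thus $P(X_{rj}=e_{rj}\ \forall r,j)=\prod_{r=1}^n\binom{n}{r}^{-1}$ if $\sum_je_{rj}=r$ for all $r$, and $0$ otherwise. $\mathcal{L}(\cdot)$ denotes the law (distribution). *)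

(* Defs.v *)
From HB Require Import structures.
From mathcomp Require Import all_boot all_order all_algebra.
Set Implicit Arguments. Unset Strict Implicit. Unset Printing Implicit Defensive.
Import Order.TTheory GRing.Theory Num.Theory.
Local Open Scope ring_scope.

(* A switch configuration: e r j = X_{(r+1) j}; stage r = 1..n is row index r-1,
   bulb j = 1..n is column index j-1. *)
Definition config (n : nat) := {ffun 'I_n -> {ffun 'I_n -> bool}}.

Definition valid n (e : config n) : bool :=
  [forall r : 'I_n, #|[set j | e r j]| == (r.+1)%N].
Definition probX n (e : config n) : rat :=
  if valid e then \prod_(r < n) ('C(n, r.+1)%:R)^-1 else 0.

Definition bulb n (e : config n) (j : 'I_n) : bool :=
  odd (\sum_(r < n) (e r j : nat)).

(* the row index of stage n/2 (i.e. value n/2 - 1), built from any i : 'I_n *)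
Lemma mid_proof n (i : 'I_n) : ((n./2).-1 < n)%N.
Proof.
case: n i => [[]//|n _]; rewrite ltnS.
apply: leq_trans (leq_pred _) _; rewrite leq_half_double.
by rewrite -addnn ltnS leq_addr.
Qed.
Definition mid n (i : 'I_n) : 'I_n := Ordinal (mid_proof i).

Definition swap n (i : 'I_n) (e : config n) (j : 'I_n) : config n :=
  [ffun r => if r == mid i then
               [ffun k => if k == i then e r j else if k == j then e r i else e r k]
             else e r].

Definition Jset n (i : 'I_n) (e : config n) : {set 'I_n} :=
  [set j | e (mid i) j == ~~ e (mid i) i].

(* conditional law of X^i given X = e, evaluated at f *)
Definition kernel n (i : 'I_n) (e f : config n) : rat :=
  if bulb e i then (f == e)%:R
  else (#|Jset i e|%:R)^-1 * \sum_(j in Jset i e) (f == swap i e j)%:R.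

Definition lawXi n (i : 'I_n) (f : config n) : rat :=
  \sum_(e : config n) probX e * kernel i e f.

Definition condlaw n (i : 'I_n) (f : config n) : rat :=
  probX f * (bulb f i)%:R / \sum_(e : config n) probX e * (bulb e i)%:R.

(* Main.v *)
Require Import Defs.
From HB Require Import structures.
From mathcomp Require Import all_boot all_order all_algebra fingroup perm.
From mathcomp Require Import zify ring.
Set Implicit Arguments. Unset Strict Implicit. Unset Printing Implicit Defensive.
Import Order.TTheory GRing.Theory Num.Theory.
Local Open Scope ring_scope.

Lemma swap_row n (i : 'I_n) (e : config n) j r :
  swap i e j r = if r == mid i then [ffun k => e r (tperm i j k)] else e r.
Proof.
rewrite /swap ffunE; case: eqP => // _; apply/ffunP => k; rewrite !ffunE.
case: tpermP => [->|->|]; first by rewrite eqxx.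
  by case: eqP => [->|]; rewrite ?eqxx.
by move=> /eqP /negbTE -> /eqP /negbTE ->.
Qed.

Lemma swapK n (i : 'I_n) (e : config n) j : swap i (swap i e j) j = e.
Proof.
apply/ffunP => r; rewrite !swap_row; case: eqP => [->|//].
apply/ffunP => k; rewrite !ffunE ?eqxx ?ffunE tpermK //.
Qed.

Lemma swap_valid n (i : 'I_n) (e : config n) j : valid (swap i e j) = valid e.
Proof.
apply: eq_forallb => r; rewrite swap_row; case: ifP => // _.
suff -> : [set k | [ffun k => e r (tperm i j k)] k] = tperm i j @^-1: [set k | e r k].
  by rewrite card_preimset //; apply: perm_inj.
by apply/setP => k; rewrite !inE ffunE.
Qed.

Lemma swap_prob n (i : 'I_n) (e : config n) j : probX (swap i e j) = probX e.
Proof. by rewrite /probX swap_valid. Qed.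

Lemma Jset_swap n (i : 'I_n) (e : config n) j :
  (j \in Jset i (swap i e j)) = (j \in Jset i e).
Proof.
rewrite !inE swap_row eqxx !ffunE tpermL tpermR.
by case: (e _ i); case: (e _ j).
Qed.

Lemma bulb_swap n (i : 'I_n) (e : config n) j : j \in Jset i e ->
  bulb (swap i e j) i = ~~ bulb e i.
Proof.
rewrite inE => /eqP hj; rewrite /bulb (bigD1 (mid i)) //= [in RHS](bigD1 (mid i)) //=.
rewrite swap_row eqxx ffunE tpermL hj !oddD.
rewrite (eq_bigr (fun r => (e r i : nat))); last first.
  by move=> r /negbTE hr; rewrite swap_row hr.
by case: (e _ i) => /=; case: (odd _).
Qed.

Lemma card_Jset n (hn : ~~ odd n) (i : 'I_n) (e : config n) :
  valid e -> #|Jset i e| = n./2.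
Proof.
move=> /forallP /(_ (mid i)) /eqP hc.
have hn2 : (n./2).*2 = n by have := odd_double_half n; rewrite (negbTE hn).
have hpos : (0 < n./2)%N.
  have npos : (0 < n)%N by apply: leq_ltn_trans (ltn_ord i).
  by rewrite lt0n; apply/eqP => h0; move: npos; rewrite -hn2 h0.
have hc' : #|[set j | e (mid i) j]| = n./2 by rewrite hc /= prednK.
case hi: (e (mid i) i).
  have -> : Jset i e = ~: [set j | e (mid i) j].
    by apply/setP => k; rewrite !inE hi /=; case: (e _ k).
  have := cardsC [set j | e (mid i) j]; rewrite hc' card_ord => h.
  move: hn2; rewrite -addnn => h2.
  by apply/eqP; rewrite -(eqn_add2l n./2) h h2.
have -> : Jset i e = [set j | e (mid i) j].
  by apply/setP => k; rewrite !inE hi /=; case: (e _ k).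
by [].
Qed.

Lemma eq_swap n (i : 'I_n) (e f : config n) j :
  (f == swap i e j) = (e == swap i f j).
Proof. by apply/eqP/eqP => ->; rewrite swapK. Qed.

Lemma sum_pick (T : finType) (A : T -> rat) (c : T) :
  \sum_(e : T) A e * (e == c)%:R = A c.
Proof.
rewrite (bigD1 c) //= eqxx mulr1 big1 ?addr0 // => e /negbTE ->.
by rewrite mulr0.
Qed.

Lemma probX0 n (e : config n) : ~~ valid e -> probX e = 0.
Proof. by rewrite /probX => /negbTE ->. Qed.

Lemma key n (hn : ~~ odd n) (i : 'I_n) (f : config n) :
  \sum_(e : config n) probX e * (if bulb e i then 0
     else (#|Jset i e|%:R)^-1 * \sum_(j in Jset i e) (f == swap i e j)%:R)
  = (bulb f i)%:R * probX f.
Proof.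
set h : rat := (n./2)%:R.
have hpos : h != 0.
  have npos : (0 < n)%N by apply: leq_ltn_trans (ltn_ord i).
  have hn2 : (n./2).*2 = n by have := odd_double_half n; rewrite (negbTE hn).
  rewrite pnatr_eq0; apply/eqP => h0; move: npos; rewrite -hn2 h0 //.
transitivity (\sum_(e : config n) \sum_(j : 'I_n)
   (~~ bulb e i && (j \in Jset i e))%:R * probX e * h^-1 * (f == swap i e j)%:R).
  apply eq_bigr => e _.
  case hb: (bulb e i) => /=.
    by rewrite mulr0 big1 // => j _; rewrite !mul0r.
  have [hv|hv] := boolP (valid e); last first.
    by rewrite probX0 // mul0r big1 // => j _; rewrite mulr0 !mul0r.
  rewrite card_Jset // -/h !mulr_sumr big_mkcond /=; apply: eq_bigr => j _.
  by case: (j \in Jset i e); rewrite /= ?mul0r ?mulr0 //; ring.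
rewrite exchange_big /=.
transitivity (\sum_(j : 'I_n) (bulb f i && (j \in Jset i f))%:R * probX f * h^-1).
  apply: eq_bigr => j _.
  under eq_bigr do rewrite eq_swap.
  rewrite sum_pick swap_prob Jset_swap.
  case hj: (j \in Jset i f); last by rewrite !andbF.
  by rewrite bulb_swap // negbK !andbT.
rewrite -big_distrl -big_distrl /=.
have [hv|hv] := boolP (valid f); last by rewrite probX0 // !mulr0 mul0r.
case: (bulb f i) => /=; last by rewrite big1 ?mul0r.
have -> : \sum_(j < n) (j \in Jset i f)%:R = (#|Jset i f|)%:R :> rat.
  by rewrite -sum1_card natr_sum [RHS]big_mkcond /=; apply: eq_bigr => j _; case: (_ \in _).
by rewrite card_Jset // -/h mul1r mulrC mulrA mulVf // mul1r.
Qed.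

Lemma valid_prod n (e : config n) :
  (valid e)%:R = \prod_(r < n) (#|[set j | e r j]| == r.+1)%:R :> rat.
Proof.
case: (pickP (fun r : 'I_n => ~~ (#|[set j | e r j]| == r.+1))) => [r hr|hno].
  have -> : valid e = false.
    by apply/negbTE/negP => /forallP /(_ r); rewrite (negbTE hr).
  by rewrite (bigD1 r) //= (negbTE hr) mul0r.
have -> : valid e = true.
  by apply/forallP => r; have := hno r; move/negbFE.
rewrite big1 // => r _; have := hno r; move/negbFE => -> //.
Qed.

Lemma count_rows n k :
  \sum_(g : {ffun 'I_n -> bool}) (#|[set j | g j]| == k)%:R = ('C(n, k))%:R :> rat.
Proof.
rewrite (reindex (fun A : {set 'I_n} => [ffun j => j \in A])) /=; last first.
  apply: onW_bij; exists (fun g : {ffun 'I_n -> bool} => [set j | g j]) => [A|g].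
    by apply/setP => j; rewrite inE ffunE.
  by apply/ffunP => j; rewrite ffunE inE.
rewrite (eq_bigr (fun A : {set 'I_n} => (#|A| == k)%:R)); last first.
  move=> A _; congr ((_ == _)%:R); apply: eq_card => j; by rewrite inE ffunE.
rewrite -[in RHS](card_ord n) -card_draws -sum1_card natr_sum [RHS]big_mkcond /=.
by apply: eq_bigr => A _; rewrite inE; case: (_ == _).
Qed.

Lemma total n : \sum_(e : config n) probX e = 1.
Proof.
set c := \prod_(r < n) ('C(n, r.+1)%:R : rat)^-1.
transitivity (\sum_(e : config n) (valid e)%:R * c).
  by apply: eq_bigr => e _; rewrite /probX; case: (valid e); rewrite ?mul1r ?mul0r.
rewrite -big_distrl /=.
under eq_bigr do rewrite valid_prod.
rewrite -(bigA_distr_bigA (fun (r : 'I_n) (g : {ffun 'I_n -> bool}) =>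
   (#|[set j | g j]| == r.+1)%:R : rat)) /=.
under eq_bigr do rewrite count_rows.
rewrite /c -big_split /= big1 // => r _; rewrite mulfV //.
by rewrite pnatr_eq0 -lt0n bin_gt0.
Qed.

Lemma half_neq0 n (hn : ~~ odd n) (i : 'I_n) : (n./2)%:R != 0 :> rat.
Proof.
have npos : (0 < n)%N by apply: leq_ltn_trans (ltn_ord i).
have hn2 : (n./2).*2 = n by have := odd_double_half n; rewrite (negbTE hn).
rewrite pnatr_eq0; apply/eqP => h0; move: npos; rewrite -hn2 h0 //.
Qed.

Lemma half_mass n (hn : ~~ odd n) (i : 'I_n) :
  \sum_(e : config n) probX e * (bulb e i)%:R = 1 / 2.
Proof.
have H1 : \sum_(e : config n) probX e * (~~ bulb e i)%:R
        = \sum_(e : config n) probX e * (bulb e i)%:R.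
  transitivity (\sum_(f : config n) \sum_(e : config n) probX e * (if bulb e i then 0
     else (#|Jset i e|%:R)^-1 * \sum_(j in Jset i e) (f == swap i e j)%:R)); last first.
    by apply: eq_bigr => f _; rewrite key // mulrC.
  rewrite exchange_big /=; apply: eq_bigr => e _.
  rewrite -mulr_sumr.
  have [hv|hv] := boolP (valid e); last by rewrite probX0 // !mul0r.
  congr (_ * _).
  case hb: (bulb e i) => /=; first by rewrite big1.
  rewrite -mulr_sumr exchange_big /=.
  rewrite (eq_bigr (fun j => 1)); last first.
    move=> j _; rewrite (eq_bigr (fun f => 1 * (f == swap i e j)%:R)).
      by rewrite sum_pick.
    by move=> f _; rewrite mul1r.
  rewrite sumr_const card_Jset // mulVf //; exact: half_neq0.
have H2 : \sum_(e : config n) probX e = \sum_(e : config n) probX e * (~~ bulb e i)%:R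
        + \sum_(e : config n) probX e * (bulb e i)%:R.
  rewrite -big_split /=; apply: eq_bigr => e _.
  by case: (bulb e i); rewrite /= ?mulr0 ?mulr1 ?addr0 ?add0r.
move: H2; rewrite total H1 => H2.
have -> : (1 : rat) / 2 = (1 / 2) * 1 by rewrite mulr1.
by rewrite [X in _ * X]H2; field.
Qed.

Theorem lemma3p2 (n : nat) (hn : ~~ odd n) (i : 'I_n) (f : config n) :
  lawXi i f = condlaw i f.
Proof.
rewrite /condlaw half_mass // /lawXi.
transitivity (\sum_(e : config n) (probX e * (bulb e i)%:R) * (e == f)%:R +
   \sum_(e : config n) probX e * (if bulb e i then 0
     else (#|Jset i e|%:R)^-1 * \sum_(j in Jset i e) (f == swap i e j)%:R)).
  rewrite -big_split /=; apply: eq_bigr => e _; rewrite /kernel eq_sym.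
  by case: (bulb e i); rewrite /= ?mulr0 ?mul0r ?mulr1 ?addr0 ?add0r.
rewrite (sum_pick (fun e => probX e * (bulb e i)%:R)) key //; field; done.
Qed.
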